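(* Let $S\subseteq[12]$ be such that $\mathsf{MAIS}(G^*_S)<\alpha(G^*_{S,u})$. Then $\beta^*_{\mathcal{B}^*_S}(1)\ge\bar{\chi}(G^*_{S,u})$.
   Context: Index coding model. A unicast index coding problem has receivers $u_1,\dots,u_n$ and messages $\mathbf{x}_j$, each a vector in $\mathcal{A}^m$ for a finite alphabet $\mathcal{A}$ and positive integer $m$ (all messages have the same length). Receiver $u_i$ demands $\mathbf{x}_j$, $j\in W_i$, and knows $\mathbf{x}_j$, $j\in K_i$, with $W_i\cap K_i=\emptyset$, the $W_i$ pairwise disjoint and every message demanded by exactly one receiver. An index code consists of an encoder mapping the messages to a codeword $\mathbf{c}\in\mathcal{A}^\ell$, subsets $R_i\subseteq[\ell]$ (receiver $u_i$ observes only $\mathbf{c}_{R_i}$), and decoders at each $u_i$ mapping $(\mathbf{c}_{R_i},\mathbf{x}_{K_i})$ to $\mathbf{x}_{W_i}$; it is valid if every receiver decodes correctly for all message values. Broadcast rate is $\ell/m$; locality at $u_i$ is $|R_i|/(m|W_i|)$ and the locality of the code is the maximum over receivers (receivers with no demand impose no constraint). $\beta^*_{\mathcal{B}}(r)$ is the infimum of broadcast rates of valid index codes for $\mathcal{B}$, over all $m\ge1$, with locality at most $r$. The problem $\mathcal{B}^*$ has three receivers and 12 messages with $W_1=\{1,2,3,4\}$, $W_2=\{5,6,7,8\}$, $W_3=\{9,10,11,12\}$, $K_1=\{5,6,9,10\}$, $K_2=\{1,2,9,11\}$, $K_3=\{1,3,5,7\}$. For $S\subseteq[12]$, $\mathcal{B}^*_S$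 is the sub-problem with receivers $u_1,u_2,u_3$, messages $\mathbf{x}_j$, $j\in S$, demand sets $W_i\cap S$ and side information sets $K_i\cap S$. $G^*$ is the directed graph on $[12]$ with a directed edge $(a,b)$ iff $b\in K_i$ where $a\in W_i$; $G^*_u$ is the undirected graph on $[12]$ with $\{a,b\}$ an edge iff both $(a,b)$ and $(b,a)$ are edges of $G^*$; $G^*_S$, $G^*_{S,u}$ are the subgraphs induced by $S$. $\mathsf{MAIS}(D)$ is the maximum number of vertices of an acyclic induced subgraph of a directed graph $D$; $\alpha$ and $\bar{\chi}$ are the independence number and clique cover number. *)

(* Defs.v *)
From mathcomp Require Import all_boot.
Set Implicit Arguments. Unset Strict Implicit. Unset Printing Implicit Defensive.

(* Messages x_1..x_12 are indexed by j : 'I_12 with x_{j+1} <-> j (0-based).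
   Receivers u_1,u_2,u_3 are indexed by i : 'I_3 (0-based). *)

Definition Wlist (i : 'I_3) : seq nat :=
  match val i with
  | 0 => [:: 1; 2; 3; 4]
  | 1 => [:: 5; 6; 7; 8]
  | _ => [:: 9; 10; 11; 12]
  end.

Definition Klist (i : 'I_3) : seq nat :=
  match val i with
  | 0 => [:: 5; 6; 9; 10]
  | 1 => [:: 1; 2; 9; 11]
  | _ => [:: 1; 3; 5; 7]
  end.

Definition Wset (i : 'I_3) : {set 'I_12} := [set j : 'I_12 | (val j).+1 \in Wlist i].
Definition Kset (i : 'I_3) : {set 'I_12} := [set j : 'I_12 | (val j).+1 \in Klist i].

Definition dedge : rel 'I_12 :=
  fun a b => [exists i : 'I_3, (a \in Wset i) && (b \in Kset i)].

Definition uedge : rel 'I_12 := fun a b => dedge a b && dedge b a.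

Definition dedge_in (T : {set 'I_12}) : rel 'I_12 :=
  fun a b => [&& a \in T, b \in T & dedge a b].

Definition acyclic_in (T : {set 'I_12}) : bool :=
  [forall a, forall b, dedge_in T a b ==> ~~ connect (dedge_in T) b a].

Definition MAIS (S : {set 'I_12}) : nat :=
  \max_(T : {set 'I_12} | (T \subset S) && acyclic_in T) #|T|.

Definition indep (T : {set 'I_12}) : bool :=
  [forall a in T, forall b in T, ~~ uedge a b].
Definition clique (T : {set 'I_12}) : bool :=
  [forall a in T, forall b in T, (a != b) ==> uedge a b].

Definition alpha (S : {set 'I_12}) : nat :=
  \max_(T : {set 'I_12} | (T \subset S) && indep T) #|T|.

(* clique cover number of G*_{S,u}: minimum number of cliques partitioning S
   (the partition of S into singletons shows the minimum is <= #|S|) *)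
Definition clique_cover (S : {set 'I_12}) : nat :=
  \big[minn/#|S|]_(P : {set {set 'I_12}} |
      partition P S && [forall B in P, clique B]) #|P|.

(* An index code for the sub-problem B*_S, alphabet A, message length m,
   codeword length l. *)
Record index_code (S : {set 'I_12}) (A : Type) (m l : nat) := IndexCode {
  enc : (forall j : 'I_12, j \in S -> 'I_m -> A) -> 'I_l -> A;
  recv : 'I_3 -> {set 'I_l};
  dec : forall i : 'I_3,
      (forall k : 'I_l, k \in recv i -> A) ->
      (forall j : 'I_12, j \in Kset i -> j \in S -> 'I_m -> A) ->
      (forall j : 'I_12, j \in Wset i -> j \in S -> 'I_m -> A)
}.

Definition valid_code S A m l (C : index_code S A m l) : Prop :=
  forall (x : forall j : 'I_12, j \in S -> 'I_m -> A) (i : 'I_3)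
         (j : 'I_12) (hW : j \in Wset i) (hS : j \in S) (t : 'I_m),
    @dec S A m l C i (fun k _ => @enc S A m l C x k) (fun j' _ hS' => x j' hS') j hW hS t = x j hS t.

(* locality at most r = 1: |R_i| / (m |W_i cap S|) <= 1 for every receiver
   with a nonempty demand *)
Definition locality_le1 S A m l (C : index_code S A m l) : Prop :=
  forall i : 'I_3, Wset i :&: S != set0 -> #|@recv S A m l C i| <= m * #|Wset i :&: S|.

(* Main.v *)
Require Import Defs.
From mathcomp Require Import all_boot.
From mathcomp Require Import zify.
From Stdlib Require Import FunctionalExtensionality.
Set Implicit Arguments. Unset Strict Implicit. Unset Printing Implicit Defensive.


Definition owner (a : nat) : nat := if a < 4 then 0 else if a < 8 then 1 else 2.
Definition Kn (i : nat) : seq nat := match i with 0 => [:: 4;5;8;9] | 1 => [:: 0;1;8;10] | _ => [:: 0;2;4;6] end.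
Definition dn (a b : nat) : bool := b \in Kn (owner a).
Definition un a b := dn a b && dn b a.
Definition indep_n (f : nat -> bool) :=
  all (fun a => all (fun b => ~~ [&& f a, f b & un a b]) (iota 0 12)) (iota 0 12).
Definition step (f : nat -> bool) (d : seq nat) : seq nat :=
  mkseq (fun b => if f b then foldr maxn 0 [seq (nth 0 d a).+1 | a <- iota 0 12 & f a && dn a b] else 0) 12.
Definition depth f := iter 13 (step f) (nseq 12 0).
Definition rank_ok (f : nat -> bool) (r : nat -> nat) :=
  all (fun a => all (fun b => [&& f a, f b & dn a b] ==> (r a < r b)) (iota 0 12)) (iota 0 12).
Definition acyc_chk f := rank_ok f (nth 0 (depth f)).
Definition check (f : nat -> bool) :=
  if indep_n f then if acyc_chk f then true else
  all (fun v => if f v then true else has (fun c => if f c then acyc_chk (fun x => (x == v) || (f x && (x != c))) else false) (iota 0 12)) (iota 0 12) else true.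
Fixpoint blists n := match n with 0 => [:: [::]] | n'.+1 => [seq b :: s | b <- [:: true; false], s <- blists n'] end.
Lemma check_all : all (fun s => check (nth false s)) (blists 12). Proof. vm_compute. reflexivity. Qed.

Lemma inW (i : 'I_3) (a : 'I_12) : (a \in Wset i) = (owner a == i).
Proof.
rewrite inE /Wlist; case: i => [[|[|[|i]]] Hi] //=; case: a => a Ha /=;
  do 12! (case: a Ha => [|a] Ha //).
Qed.

Lemma inK (i : 'I_3) (a : 'I_12) : (a \in Kset i) = (val a \in Kn i).
Proof.
rewrite inE /Klist; case: i => [[|[|[|i]]] Hi] //=; case: a => a Ha /=;
  do 12! (case: a Ha => [|a] Ha //).
Qed.

Lemma owner_lt (n : nat) : owner n < 3.
Proof. by rewrite /owner; case: ifP => //; case: ifP. Qed.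

Lemma dedgeE (a b : 'I_12) : dedge a b = dn a b.
Proof.
rewrite /dedge; apply/existsP/idP => [[i /andP[]]|H].
  by rewrite inW inK => /eqP <-.
exists (Ordinal (owner_lt a)); by rewrite inW inK eqxx.
Qed.


Definition memN (T : {set 'I_12}) : nat -> bool :=
  nth false (mkseq (fun x => @inord 11 x \in T) 12).

Lemma memNE T (a : 'I_12) : memN T a = (a \in T).
Proof. by rewrite /memN nth_mkseq // inord_val. Qed.

Lemma memN_ge T x : 12 <= x -> memN T x = false.
Proof. by move=> h; rewrite /memN nth_default // size_mkseq. Qed.

Lemma indep_sound T : indep T -> indep_n (memN T).
Proof.
move=> /forallP H; apply/allP => a; rewrite mem_iota add0n => Ha.
apply/allP => b; rewrite mem_iota add0n => Hb.
have := H (Ordinal Ha).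
rewrite -(memNE T (Ordinal Ha)) /=.
case: (memN T a) => //= /forallP /(_ (Ordinal Hb)).
rewrite -(memNE T (Ordinal Hb)) /uedge !dedgeE /=.
by case: (memN T b).
Qed.

Lemma rank_sound T r : rank_ok (memN T) r -> acyclic_in T.
Proof.
move=> H.
have key : forall x y, dedge_in T x y -> r x < r y.
  move=> x y /and3P[xT yT dxy].
  have := allP H x; rewrite mem_iota add0n ltn_ord => /(_ isT) /allP /(_ y).
  rewrite mem_iota add0n ltn_ord => /(_ isT).
  by rewrite !memNE xT yT -dedgeE dxy.
apply/forallP => a; apply/forallP => b; apply/implyP => dab.
apply/negP => /connectP [p pth Ea].
have : r b <= r (last b p).
  elim: p b pth {Ea dab} => [|y p IH] x //= /andP[exy pth].
  exact: leq_trans (ltnW (key _ _ exy)) (IH _ pth).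
by rewrite -Ea leqNgt key.
Qed.

Lemma acyc_sound T : acyc_chk (memN T) -> acyclic_in T.
Proof. exact: rank_sound. Qed.

Lemma mem_blists n s : size s = n -> s \in blists n.
Proof.
elim: n s => [|n IH] [|b s] //= [Hs].
case: b; rewrite /= mem_cat ?cats0; apply/orP; [left|right];
  apply: map_f; exact: IH.
Qed.

Lemma indep_of_MAIS S : MAIS S < alpha S -> indep S.
Proof.
move=> H.
have [I /andP[IS indI] EI] : {I : {set 'I_12} | (I \subset S) && indep I & alpha S = #|I|}.
  rewrite /alpha; apply: eq_bigmax_cond.
  apply/card_gt0P; exists set0; rewrite unfold_in /= sub0set /=.
  by apply/forallP => a; rewrite inE.
have leM : forall T : {set 'I_12}, T \subset S -> acyclic_in T -> #|T| <= MAIS S.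
  by move=> T TS aT; rewrite /MAIS; apply: (leq_bigmax_cond T); rewrite TS aT.
have := allP check_all (mkseq (fun x => @inord 11 x \in I) 12).
rewrite mem_blists ?size_mkseq // => /(_ isT).
rewrite /check -/(memN I) (indep_sound indI).
case: ifP => [/acyc_sound aI _|_ Hall].
  by have := leM I IS aI; rewrite -EI leqNgt H.
suff SI : S \subset I.
  apply/forallP => a; apply/implyP => aS; apply/forallP => b; apply/implyP => bS.
  by have := forallP indI a; rewrite (subsetP SI a aS) implyTb => /forallP /(_ b);
    rewrite (subsetP SI b bS).
apply/subsetP => v vS; apply/negPn/negP => vI.
have := allP Hall v; rewrite mem_iota add0n ltn_ord => /(_ isT).
rewrite memNE (negbTE vI) => /hasP [c]; rewrite mem_iota add0n => hc.
case: ifP => // cI aT.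
pose c' : 'I_12 := Ordinal hc.
pose T := v |: (I :\ c').
have EmT : memN T = (fun x => (x == v) || (memN I x && (x != c))).
  apply: functional_extensionality => x.
  case: (ltnP x 12) => hx.
    rewrite (memNE T (Ordinal hx)) (memNE I (Ordinal hx)) !inE.
    by rewrite andbC.
  rewrite !memN_ge //; case: eqP => // Ex.
  by move: (ltn_ord v); rewrite -Ex ltnNge hx.
have aTT : acyclic_in T by apply: acyc_sound; rewrite EmT.
have TS : T \subset S.
  apply/subsetP => x; rewrite !inE => /orP[/eqP -> //|/andP[_ xI]].
  exact: (subsetP IS).
have cT : #|T| = #|I|.
  rewrite cardsU1 !inE (negbTE vI) andbF /=.
  rewrite (cardsD1 c' I) -memNE /=.
  by rewrite cI.
by have := leM T TS aTT; rewrite cT -EI leqNgt H.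
Qed.


Lemma WK_disj (i : 'I_3) (a : 'I_12) : a \in Wset i -> a \in Kset i -> False.
Proof.
rewrite inW inK => /eqP <-; case: a => a Ha /=.
by do 12! (case: a Ha => [|a] Ha //).
Qed.

Lemma WW_disj (i j : 'I_3) (a : 'I_12) : i != j -> a \in Wset i -> a \in Wset j -> False.
Proof.
rewrite !inW => /eqP ij /eqP ei /eqP ej; apply: ij; apply: val_inj; by rewrite /= -ei -ej.
Qed.

Definition msgs (S : {set 'I_12}) (A : Type) (m : nat) :=
  forall j : 'I_12, j \in S -> 'I_m -> A.

Definition Pt (S : {set 'I_12}) (i : 'I_3) (m : nat) :=
  {p : 'I_12 * 'I_m | p.1 \in Wset i :&: S}.

Definition mix S (A : Type) m i (x0 : msgs S A m) (z : Pt S i m -> A) : msgs S A m :=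
  fun j hj t => if (insub (j, t) : option (Pt S i m)) is Some q then z q else x0 j hj t.
Arguments mix {S A m i} x0 z j hj t.

Lemma mix_notW S (A : Type) m i (x0 : msgs S A m) (z : Pt S i m -> A) j hj t :
  j \notin Wset i -> mix x0 z j hj t = x0 j hj t.
Proof. by move=> hW; rewrite /mix insubF // inE (negbTE hW). Qed.

Lemma mix_W S (A : Type) m i (x0 : msgs S A m) (z : Pt S i m -> A) j hj t
  (hq : (j, t).1 \in Wset i :&: S) :
  mix x0 z j hj t = z (exist _ (j, t) hq).
Proof.
rewrite /mix; case: insubP => [q _ Eq|]; last by rewrite hq.
by congr z; apply: val_inj; rewrite /= Eq.
Qed.

Lemma dec_eq S (A : Type) m l (C : index_code S A m l) : valid_code C ->
  forall i (x y : msgs S A m),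
  (forall j hj t, j \in Kset i -> x j hj t = y j hj t) ->
  (forall k, k \in recv C i -> enc C x k = enc C y k) ->
  forall j (hW : j \in Wset i) (hS : j \in S) t, x j hS t = y j hS t.
Proof.
move=> V i x y HK HR j hW hS t.
rewrite -(V x i j hW hS t) -(V y i j hW hS t); f_equal.
  apply: functional_extensionality_dep => k.
  apply: functional_extensionality_dep => h; exact: HR.
apply: functional_extensionality_dep => j'.
apply: functional_extensionality_dep => h1.
apply: functional_extensionality_dep => h2.
apply: functional_extensionality => t'; exact: HK.
Qed.

Lemma mix_inj S (A : Type) m l (C : index_code S A m l) : valid_code C ->
  forall i (x0 y0 : msgs S A m) (z1 z2 : {ffun Pt S i m -> A}),
  (forall j hj t, j \in Kset i -> x0 j hj t = y0 j hj t) ->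
  (forall k, k \in recv C i -> enc C (mix x0 z1) k = enc C (mix y0 z2) k) ->
  z1 = z2.
Proof.
move=> V i x0 y0 z1 z2 HK HR; apply/ffunP => [[[j t] hq]].
have hq' := hq; rewrite inE in hq'; case/andP: hq' => hW hS.
have := dec_eq V _ HR hW hS t.
rewrite !(mix_W _ _ _ hq) => -> //.
move=> j' hj t' hK.
have hnW : j' \notin Wset i by apply/negP => hW'; exact: (WK_disj hW' hK).
by rewrite !mix_notW //; apply: HK.
Qed.

Lemma count_lem S (A : finType) m l (C : index_code S A m l) : valid_code C ->
  1 < #|A| -> forall i (x0 : msgs S A m) (R' : {set 'I_l}),
  (forall z1 z2 : {ffun Pt S i m -> A},
     (forall k, k \in R' -> enc C (mix x0 z1) k = enc C (mix x0 z2) k) ->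
     forall k, k \in recv C i -> enc C (mix x0 z1) k = enc C (mix x0 z2) k) ->
  m * #|Wset i :&: S| <= #|R'|.
Proof.
move=> V hA i x0 R' H.
pose F (z : {ffun Pt S i m -> A}) : {ffun {k : 'I_l | k \in R'} -> A} :=
  [ffun k => enc C (mix x0 z) (val k)].
have Finj : injective F.
  move=> z1 z2 /ffunP HF; apply: (mix_inj V (x0 := x0) (y0 := x0)) => //.
  apply: H => k kR; have := HF (exist _ k kR); by rewrite !ffunE.
have := leq_card F Finj; rewrite !card_ffun !card_sig leq_exp2l //.
have -> : #|[pred x : 'I_12 * 'I_m | x.1 \in Wset i :&: S]| = #|setX (Wset i :&: S) [set: 'I_m]|.
  by apply: eq_card => p; rewrite !inE andbT.
rewrite cardsX cardsT card_ord mulnC.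
by have -> : #|[pred x : 'I_l | x \in R']| = #|R'| by apply: eq_card.
Qed.


Lemma PtS S i m (q : Pt S i m) : (val q).1 \in S.
Proof. by case/setIP: (valP q). Qed.

Lemma interf S (A : finType) m l (C : index_code S A m l) : valid_code C ->
  locality_le1 C -> 1 < #|A| -> forall i, Wset i :&: S != set0 ->
  forall x y : msgs S A m,
  (forall j hj t, (j \in Wset i) || (j \in Kset i) -> x j hj t = y j hj t) ->
  forall k, k \in recv C i -> enc C x k = enc C y k.
Proof.
move=> V loc hA i hne x y Hxy.
pose zx : {ffun Pt S i m -> A} := [ffun q => x (val q).1 (PtS q) (val q).2].
have Emix : forall x' : msgs S A m, (forall j hj t, j \in Wset i -> x j hj t = x' j hj t) ->
    mix x' zx = x'.
  move=> x' Hx'.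
  apply: functional_extensionality_dep => j.
  apply: functional_extensionality_dep => hj.
  apply: functional_extensionality => t.
  case hW: (j \in Wset i); last by rewrite mix_notW ?hW.
  have hq : (j, t).1 \in Wset i :&: S by rewrite inE hW hj.
  rewrite (mix_W _ _ _ hq) ffunE /= -Hx' //.
  by rewrite (bool_irrelevance (PtS (exist _ (j, t) hq)) hj).
have main : forall z : {ffun Pt S i m -> A}, forall k, k \in recv C i ->
    enc C (mix x z) k = enc C (mix y z) k.
  move=> z.
  pose G (x0 : msgs S A m) (z : {ffun Pt S i m -> A}) : {ffun {k : 'I_l | k \in recv C i} -> A} :=
    [ffun k => enc C (mix x0 z) (val k)].
  have Ginj : injective (G x).
    move=> z1 z2 /ffunP HF; apply: (mix_inj V (x0 := x) (y0 := x)) => //.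
    move=> k kR; have := HF (exist _ k kR); by rewrite !ffunE.
  have [g Gg gG] : bijective (G x).
    apply: (inj_card_bij Ginj).
    rewrite !card_ffun !card_sig; apply: leq_pexp2l; first exact: ltnW.
    have -> : #|[pred x : 'I_12 * 'I_m | x.1 \in Wset i :&: S]| = #|setX (Wset i :&: S) [set: 'I_m]|.
      by apply: eq_card => p; rewrite !inE andbT.
    rewrite cardsX cardsT card_ord mulnC.
    have -> : #|[pred x : 'I_l | x \in recv C i]| = #|recv C i| by apply: eq_card.
    exact: loc.
  have Ez : g (G y z) = z.
    apply: (mix_inj V (x0 := x) (y0 := y)).
      by move=> j hj t hK; apply: Hxy; rewrite hK orbT.
    move=> k kR; have /ffunP /(_ (exist _ k kR)) := gG (G y z).
    by rewrite !ffunE.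
  move=> k kR; have /ffunP /(_ (exist _ k kR)) := gG (G y z).
  by rewrite Ez !ffunE.
move=> k kR; have := main zx k kR.
rewrite (Emix x) // (Emix y) //.
by move=> j hj t hW; apply: Hxy; rewrite hW.
Qed.

Lemma Req S (A : finType) m l (C : index_code S A m l) : valid_code C ->
  locality_le1 C -> 1 < #|A| -> forall i, 0 < #|Wset i :&: S| ->
  #|recv C i| = m * #|Wset i :&: S|.
Proof.
move=> V loc hA i hw; apply/eqP; rewrite eqn_leq loc -?card_gt0 //=.
case/card_gt0P: (ltnW hA) => a0 _.
by apply: (count_lem V hA (x0 := fun _ _ _ => a0)).
Qed.



Lemma nonconst S (A : finType) m l (C : index_code S A m l) : valid_code C ->
  locality_le1 C -> 1 < #|A| -> 0 < m -> forall j, 0 < #|Wset j :&: S| ->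
  forall k, k \in recv C j -> forall x0 : msgs S A m,
  ~ (forall z1 z2 : {ffun Pt S j m -> A}, enc C (mix x0 z1) k = enc C (mix x0 z2) k).
Proof.
move=> V loc hA hm j hw k hk x0 Hc.
have H := count_lem V hA (x0 := x0) (R' := recv C j :\ k).
have := Req V loc hA hw; rewrite (cardsD1 k) hk => Er.
have hp : 0 < m * #|Wset j :&: S| by rewrite muln_gt0 hm.
have : m * #|Wset j :&: S| <= #|recv C j :\ k|.
  apply: H => z1 z2 Hz k' hk'.
  case: (eqVneq k' k) => [->|ne]; first exact: Hc.
  by apply: Hz; rewrite !inE ne hk'.
move: Er hp; rewrite /=; lia.
Qed.

Lemma disj_one S (A : finType) m l (C : index_code S A m l) : valid_code C ->
  locality_le1 C -> 1 < #|A| -> 0 < m -> forall i j, i != j ->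
  0 < #|Wset i :&: S| -> 0 < #|Wset j :&: S| ->
  (forall b, b \in Wset j -> b \in S -> b \notin Kset i) ->
  forall k, k \in recv C i -> k \in recv C j -> False.
Proof.
move=> V loc hA hm i j ij hwi hwj Ho k ki kj.
case/card_gt0P: (ltnW hA) => a0 _.
apply: (nonconst V loc hA hm hwj kj (x0 := fun _ _ _ => a0)) => z1 z2.
apply: (interf V loc hA (i := i)) => //; first by rewrite -card_gt0.
move=> j' hj t H'.
have nW : j' \notin Wset j.
  apply/negP => hW; case/orP: H' => [hWi|hK].
    exact: (WW_disj ij hWi hW).
  by move: (Ho j' hW hj); rewrite hK.
by rewrite !mix_notW.
Qed.

Lemma orient S : indep S -> forall i j : 'I_3,
  (forall b, b \in Wset j -> b \in S -> b \notin Kset i) \/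
  (forall a, a \in Wset i -> a \in S -> a \notin Kset j).
Proof.
move=> Hind i j.
case: (boolP [exists b, [&& b \in Wset j, b \in S & b \in Kset i]]) =>
   [/existsP[b /and3P[bW bS bK]]|/existsPn Hb]; last first.
  by left => b bW bS; move: (Hb b); rewrite bW bS.
right => a aW aS; apply/negP => aK.
move: (forallP Hind a); rewrite aS implyTb => /forallP /(_ b); rewrite bS implyTb.
move/negP; apply; apply/andP; split; apply/existsP.
  by exists i; rewrite aW bK.
by exists j; rewrite bW aK.
Qed.

Lemma cardsU_disj (T : finType) (X Y : {set T}) :
  (forall k, k \in X -> k \in Y -> False) -> #|X :|: Y| = #|X| + #|Y|.
Proof.
move=> H; rewrite cardsU.
have -> : X :&: Y = set0.
  by apply/setP => k; rewrite !inE; apply/negP => /andP[]; exact: H.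
by rewrite cards0 subn0.
Qed.

Definition i0 : 'I_3 := @Ordinal 3 0 isT.
Definition i1 : 'I_3 := @Ordinal 3 1 isT.
Definition i2 : 'I_3 := @Ordinal 3 2 isT.

Lemma cardS_split (S : {set 'I_12}) :
  #|S| = #|Wset i0 :&: S| + #|Wset i1 :&: S| + #|Wset i2 :&: S|.
Proof.
have ES : S = (Wset i0 :&: S) :|: (Wset i1 :&: S) :|: (Wset i2 :&: S).
  apply/setP => a; rewrite ?in_setU !in_setI !inW /=.
  by case: (a \in S); rewrite ?andbF ?andbT //=; case: (owner a) (owner_lt a) => [|[|[|]]].
rewrite {1}ES cardsU_disj; last first.
  move=> k; rewrite ?in_setU !in_setI !inW /= => /orP[] /andP[/eqP -> _] /andP[/eqP] //.
rewrite cardsU_disj // => k; rewrite ?in_setU !in_setI !inW /= => /andP[/eqP -> _] /andP[/eqP] //.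
Qed.

Lemma info_bound S (A : finType) m l (C : index_code S A m l) : valid_code C ->
  locality_le1 C -> 1 < #|A| -> 0 < m -> indep S -> #|S| * m <= l.
Proof.
move=> V loc hA hm hind.
pose R i := if 0 < #|Wset i :&: S| then recv C i else set0.
have cR : forall i, #|R i| = m * #|Wset i :&: S|.
  move=> i; rewrite /R; case: ifP => h; first exact: Req.
  by rewrite cards0; move: h; rewrite lt0n => /negbFE /eqP ->; rewrite muln0.
have dR : forall i j, i != j -> forall k, k \in R i -> k \in R j -> False.
  move=> i j ij k; rewrite /R.
  case: ifP => hi; last by rewrite inE.
  case: ifP => hj; last by rewrite inE.
  case: (orient hind i j) => Ho ki kj.
    exact: (disj_one V loc hA hm ij hi hj Ho ki kj).
  by apply: (disj_one V loc hA hm _ hj hi Ho kj ki); rewrite eq_sym.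
have := max_card (mem (R i0 :|: R i1 :|: R i2)).
rewrite card_ord cardsU_disj; last first.
  move=> k; rewrite inE => /orP[] h1 h2.
    by apply: (dR i0 i2 _ k).
  by apply: (dR i1 i2 _ k).
rewrite cardsU_disj; last by move=> k; apply: (dR i0 i1).
by rewrite !cR (cardS_split S); lia.
Qed.

Theorem lemma6 (S : {set 'I_12}) :
  MAIS S < alpha S ->
  forall (A : finType), 1 < #|A| ->
  forall (m l : nat), 0 < m ->
  forall C : index_code S A m l,
    valid_code C -> locality_le1 C ->
    clique_cover S * m <= l.
Proof.
move=> H A hA m l hm C V loc.
have cc : clique_cover S <= #|S|.
  rewrite /clique_cover; elim/big_rec: _ => // P x _ Hx.
  by rewrite geq_min Hx orbT.
apply: leq_trans (info_bound V loc hA hm (indep_of_MAIS H)).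
by rewrite leq_mul2r cc orbT.
Qed.
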